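(* Let $X\subset\mathbf{P}^n$ be a geometrically integral hypersurface of degree $d\ge2$ and let $H_0\subset\mathbf{P}^n$ be a hyperplane with $\Lambda(X)\cap H_0\neq\emptyset$. Let $\mathbf{P}^{n\vee}$ be the dual projective space and let $S_X\subset\mathbf{P}^{n\vee}$ be the set of hyperplanes $H$ with $\dim(\Lambda(X\cap H)\cap H_0)\ge\dim(\Lambda(X)\cap H_0)$. Then $S_X$ is a closed proper subset of $\mathbf{P}^{n\vee}$ defined by $O_{d,n}(1)$ homogeneous polynomials of degree $O_{d,n}(1)$.
   Context: For a hypersurface $Y$ of degree $d$ (in $\mathbf{P}^n$, or in a hyperplane $H\cong\mathbf{P}^{n-1}$), $\Lambda(Y)$ denotes the set of points of multiplicity $d$ on $Y$; it is a projective linear subspace. $X\cap H$ is regarded as a hypersurface of degree $d$ in $H$. The dimension of the empty set is $-1$. Implied constants depend only on $d$ and $n$. *)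

(* Defs.v *)
From HB Require Import structures.
From mathcomp Require Import all_boot all_order all_algebra.
From mathcomp Require Import mpoly.
From Stdlib Require Import ClassicalDescription.

Set Implicit Arguments.
Unset Strict Implicit.
Unset Printing Implicit Defensive.

Import Order.TTheory GRing.Theory.
Local Open Scope ring_scope.

Section ProjDefs.
Variables (K : fieldType) (n : nat).

(* Points of P^n are nonzero row vectors of K^(n+1) (up to scaling);
   F : {mpoly K[n.+1]} is a form in the coordinates x_0..x_n. *)
Definition coords (p : 'rV[K]_n.+1) : 'I_n.+1 -> K := fun i => p 0 i.

(* Linear form h (a nonzero row vector) defines the hyperplane
   {p | sum_i h_i p_i = 0}; it is also a point of the dual space. *)
Definition on_hyp (h p : 'rV[K]_n.+1) : Prop := p *m h^T = 0.

(* Given a point p of a linear subspace L of K^(n+1) whose (vector) space is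
   spanned by the rows of M : 'M_(r, n.+1), the polynomial
   z |-> F (p + z *m M) in r variables: Taylor expansion of F|_L at p. *)
Definition shift_poly (r : nat) (F : {mpoly K[n.+1]}) (p : 'rV[K]_n.+1)
    (M : 'M[K]_(r, n.+1)) : {mpoly K[r]} :=
  F \mPo [tuple ((p 0 i)%:MP + \sum_(j < r) M j i *: 'X_j) | i < n.+1].

(* The multiplicity at p of F restricted to L is >= m: all terms of degree
   < m of the Taylor expansion vanish. *)
Definition mult_ge (r : nat) (F : {mpoly K[n.+1]}) (p : 'rV[K]_n.+1)
    (M : 'M[K]_(r, n.+1)) (m : nat) : Prop :=
  forall mono : 'X_{1..r}, (mdeg mono < m)%N -> (shift_poly F p M)@_mono = 0.

(* Lambda(X) for X = V(F) of degree d in P^n: points of multiplicity d. *)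
Definition LambdaX (F : {mpoly K[n.+1]}) (d : nat) (p : 'rV[K]_n.+1) : Prop :=
  p != 0 /\ mult_ge F p (1%:M : 'M[K]_n.+1) d.

(* Lambda(X cap H) for H = {a . x = 0}: points of H where X cap H, viewed as
   a degree-d hypersurface in H, has multiplicity d.  The (vector space of)
   H is spanned by the rows of kermx a^T. *)
Definition LambdaXH (F : {mpoly K[n.+1]}) (d : nat) (a p : 'rV[K]_n.+1) : Prop :=
  p != 0 /\ on_hyp a p /\ mult_ge F p (kermx a^T) d.

(* Dimension of a projective linear subspace given as its set S of points
   (nonzero vectors): (max number of linearly independent vectors in S) - 1;
   the empty set has dimension -1. *)
Definition has_indep (S : 'rV[K]_n.+1 -> Prop) (r : nat) : Prop :=
  exists V : 'M[K]_(r, n.+1), row_free V /\ forall i, S (row i V).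

Definition has_indepb (S : 'rV[K]_n.+1 -> Prop) (r : nat) : bool :=
  if excluded_middle_informative (has_indep S r) then true else false.

Definition pdim (S : 'rV[K]_n.+1 -> Prop) : int :=
  ((\max_(r < n.+2 | has_indepb S r) r)%N)%:Z - 1.

Definition SX (F : {mpoly K[n.+1]}) (d : nat) (h0 a : 'rV[K]_n.+1) : Prop :=
  (pdim (fun p => LambdaX F d p /\ on_hyp h0 p)
     <= pdim (fun p => LambdaXH F d a p /\ on_hyp h0 p))%R.

End ProjDefs.

Definition irreducible_elt (R : idomainType) (F : R) : Prop :=
  F != 0 /\ F \isn't a GRing.unit /\
  forall g h : R, F = g * h -> g \is a GRing.unit \/ h \is a GRing.unit.

(* Main.v *)
Require Import Defs.
From HB Require Import structures.
From mathcomp Require Import all_boot all_order all_algebra.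
From mathcomp Require Import mpoly.
From mathcomp Require Import ring zify.
From Stdlib Require Import ClassicalDescription.

Set Implicit Arguments.
Unset Strict Implicit.
Unset Printing Implicit Defensive.
Import GRing.Theory Num.Theory.
Local Open Scope ring_scope.

Section S.
Variable K : fieldType.
Variable r : nat.
Implicit Types p q a b A B : {mpoly K[r]}.

Lemma msizeM_sharp p q : (msize (p * q) <= (msize p + msize q).-1)%N.
Proof.
have [->|nz_p ] := eqVneq p 0; first by rewrite mul0r msize0.
have [->|nz_q ] := eqVneq q 0; first by rewrite mulr0 msize0.
have [->|nz_pq] := eqVneq (p * q) 0; first by rewrite msize0.
rewrite -!mlead_deg // addSn /= addnS ltnS.
by have /lemc_mdeg := mleadM_le p q; rewrite mdegD.
Qed.

Lemma msizeB_le p q k : (msize p <= k)%N -> (msize q <= k)%N -> (msize (p - q) <= k)%N.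
Proof.
move=> hp hq; apply: leq_trans (msizeD_le _ _) _; rewrite geq_max hp /=.
by rewrite msizeN.
Qed.

Lemma mul_diff a b A B (ka kb : nat) :
  (msize (a - b) <= ka)%N -> (msize b <= ka.+1)%N ->
  (msize (A - B) <= kb)%N -> (msize B <= kb.+1)%N ->
  (msize (a * A - b * B) <= ka + kb)%N /\ (msize (b * B) <= (ka + kb).+1)%N.
Proof.
move=> h1 h2 h3 h4.
have e : a * A - b * B = (a - b) * (A - B) + ((a - b) * B + b * (A - B)).
  by ring.
split.
  rewrite e; apply: leq_trans (msizeD_le _ _) _; rewrite geq_max; apply/andP; split.
    by have := msizeM_sharp (a - b) (A - B); lia.
  apply: leq_trans (msizeD_le _ _) _; rewrite geq_max; apply/andP; split.
    by have := msizeM_sharp (a - b) B; lia.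
  by have := msizeM_sharp b (A - B); lia.
by have := msizeM_sharp b B; lia.
Qed.

Lemma pow_diff a b k : (msize (a - b) <= 1)%N -> (msize b <= 2)%N ->
  (msize (a ^+ k - b ^+ k) <= k)%N /\ (msize (b ^+ k) <= k.+1)%N.
Proof.
move=> h1 h2; elim: k => [|k [ih1 ih2]].
  by rewrite !expr0 subrr msize0 msize1.
by rewrite !exprS; have := mul_diff h1 h2 ih1 ih2; rewrite add1n.
Qed.

Lemma prod_diff (I : Type) (s : seq I) (e : I -> nat) (x y : I -> {mpoly K[r]}) :
  (forall i, msize (x i - y i) <= 1)%N -> (forall i, msize (y i) <= 2)%N ->
  (msize (\prod_(i <- s) x i ^+ e i - \prod_(i <- s) y i ^+ e i) <= \sum_(i <- s) e i)%N
  /\ (msize (\prod_(i <- s) y i ^+ e i) <= (\sum_(i <- s) e i).+1)%N.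
Proof.
move=> h1 h2; elim: s => [|i s [ih1 ih2]].
  by rewrite !big_nil subrr msize0 msize1.
rewrite !big_cons; have [p1 p2] := pow_diff (e i) (h1 i) (h2 i).
exact: mul_diff p1 p2 ih1 ih2.
Qed.

Lemma prod_homog (I : Type) (s : seq I) (e : I -> nat) (y : I -> {mpoly K[r]}) :
  (forall i, y i \is 1.-homog) ->
  \prod_(i <- s) y i ^+ e i \is (\sum_(i <- s) e i).-homog.
Proof.
move=> h; elim: s => [|i s ih]; first by rewrite !big_nil dhomog1.
rewrite !big_cons; have := dhomogMn (e i) (h i); rewrite mul1n => hi.
exact: dhomogM.
Qed.

End S.

Section T.
Variable K : fieldType.

Definition tupg (m r : nat) (c : 'rV[K]_m) (M : 'M[K]_(r, m)) : m.-tuple {mpoly K[r]} :=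
  [tuple ((c 0 i)%:MP + \sum_(j < r) M j i *: 'X_j) | i < m].

Lemma comp_mpolyA (m r r' : nat) (p : {mpoly K[m]}) (lq : m.-tuple {mpoly K[r]})
  (lr : r.-tuple {mpoly K[r']}) :
  (p \mPo lq) \mPo lr = p \mPo [tuple (tnth lq i) \mPo lr | i < m].
Proof.
rewrite [p \mPo lq]comp_mpolyE [p \mPo _]comp_mpolyE raddf_sum /=; apply: eq_bigr => mm _.
rewrite comp_mpolyZ rmorph_prod /=; congr (_ *: _); apply: eq_bigr => i _.
by rewrite rmorphXn /= tnth_mktuple.
Qed.

Lemma comp_tupg (m r r' : nat) (c : 'rV[K]_m) (M : 'M[K]_(r, m)) (c' : 'rV[K]_r)
   (Q : 'M[K]_(r', r)) :
  [tuple (tnth (tupg c M) i) \mPo (tupg c' Q) | i < m] = tupg (c + c' *m M) (Q *m M).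
Proof.
apply: eq_from_tnth => i; rewrite !tnth_mktuple.
rewrite comp_mpolyD comp_mpolyC raddf_sum /= !mxE.
rewrite (raddfD (@mpolyC _ K)) /= -addrA; congr (_ + _).
under eq_bigr => j _ do rewrite comp_mpolyZ comp_mpolyXU -tnth_nth tnth_mktuple.
under [X in _ = _ + X]eq_bigr => k _ do rewrite mxE scaler_suml.
rewrite (exchange_big) /= raddf_sum /= -big_split /=; apply: eq_bigr => j _.
rewrite scalerDr scaler_sumr; congr (_ + _).
  by rewrite -mul_mpolyC -rmorphM mulrC.
by apply: eq_bigr => k _; rewrite scalerA mulrC.
Qed.


Lemma tupg0_homog m r (M : 'M[K]_(r, m)) i : tnth (tupg 0 M) i \is 1.-homog.
Proof.
rewrite tnth_mktuple mxE mpolyC0 add0r; apply: rpred_sum => j _.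
by apply: dhomogZ; rewrite dhomogX; apply/eqP; apply: mdeg1.
Qed.

Lemma tupg0_size m r (M : 'M[K]_(r, m)) i : (msize (tnth (tupg 0 M) i) <= 2)%N.
Proof.
rewrite tnth_mktuple mxE mpolyC0 add0r; apply: leq_trans (msize_sum _ _ _) _.
apply/bigmax_leqP => j _; apply: leq_trans (msizeZ_le _ _) _.
by rewrite msizeX mdeg1.
Qed.

Lemma tupg_diff m r (c : 'rV[K]_m) (M : 'M[K]_(r, m)) i :
  (msize (tnth (tupg c M) i - tnth (tupg 0 M) i) <= 1)%N.
Proof.
rewrite !tnth_mktuple mxE mpolyC0 add0r addrK msizeC; by case: (_ != 0).
Qed.

Lemma shift_homog m r d (F : {mpoly K[m]}) (M : 'M[K]_(r, m)) :
  F \is d.-homog -> F \mPo tupg 0 M \is d.-homog.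
Proof.
move=> hF; rewrite comp_mpolyE big_seq; apply: rpred_sum => mm hm; apply: dhomogZ.
rewrite -(dhomog_mf hF hm) /= mdegE.
exact: (prod_homog (index_enum (ordinal m)) (fun i => mm i) (tupg0_homog M)).
Qed.

Lemma shift_diff m r d (F : {mpoly K[m]}) (c : 'rV[K]_m) (M : 'M[K]_(r, m)) :
  F \is d.-homog -> (msize ((F \mPo tupg c M) - (F \mPo tupg 0 M)) <= d)%N.
Proof.
move=> hF; rewrite !comp_mpolyE -sumrN -big_split /= big_seq; apply: leq_trans (msize_sum _ _ _) _.
apply/bigmax_leqP_seq => mm _ hm; rewrite -scalerN -scalerDr; apply: leq_trans (msizeZ_le _ _) _.
rewrite -(dhomog_mf hF hm) /= mdegE.
have [h _] := prod_diff (index_enum 'I_m) (fun i => mm i) (tupg_diff c M) (tupg0_size M).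
exact: h.
Qed.

Lemma mult_iff m r d (F : {mpoly K[m]}) (c : 'rV[K]_m) (M : 'M[K]_(r, m)) :
  F \is d.-homog ->
  (forall mono : 'X_{1..r}, (mdeg mono < d)%N -> (F \mPo tupg c M)@_mono = 0) <->
  F \mPo tupg c M = F \mPo tupg 0 M.
Proof.
move=> hF; split => [h|->].
  apply/eqP; rewrite -subr_eq0; apply/eqP/mpolyP => mono; rewrite mcoeff0.
  have [lt|ge] := ltnP (mdeg mono) d.
    rewrite mcoeffB h // (dhomog_nemf_coeff (shift_homog M hF)) ?subr0 //.
    by rewrite neq_ltn lt.
  apply/eqP; rewrite mcoeff_eq0; apply: msize_mdeg_ge.
  exact: leq_trans (shift_diff c M hF) ge.
move=> mono lt; apply: (dhomog_nemf_coeff (shift_homog M hF)).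
by rewrite neq_ltn lt.
Qed.


Lemma sum_unit m (i : 'I_m) : \sum_(j < m) (1%:M : 'M[K]_m) j i *: ('X_j : {mpoly K[m]}) = 'X_i.
Proof.
rewrite (bigD1 i) //= mxE eqxx scale1r big1 ?addr0 // => j hj.
by rewrite mxE (negbTE hj) scale0r.
Qed.

Lemma tupg01 m : tupg (0 : 'rV[K]_m) 1%:M = [tuple 'X_i | i < m].
Proof.
apply: eq_from_tnth => i; rewrite !tnth_mktuple mxE mpolyC0 add0r.
exact: sum_unit.
Qed.

Lemma comp_tupg01 m (F : {mpoly K[m]}) : F \mPo tupg 0 1%:M = F.
Proof. by rewrite tupg01 comp_mpoly_id. Qed.

Lemma shiftA m r r' (F : {mpoly K[m]}) (c : 'rV[K]_m) (M : 'M[K]_(r, m)) (c' : 'rV[K]_r)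
   (Q : 'M[K]_(r', r)) :
  (F \mPo tupg c M) \mPo tupg c' Q = F \mPo tupg (c + c' *m M) (Q *m M).
Proof. by rewrite comp_mpolyA comp_tupg. Qed.

Lemma coef_sumX k k' (p : {mpoly K[k]}) (f : 'X_{1..k} -> 'X_{1..k'}) mu :
  (\sum_(nu <- msupp p) p@_nu *: 'X_[f nu])@_mu =
  \sum_(nu <- msupp p) p@_nu * (f nu == mu)%:R.
Proof. by rewrite raddf_sum /=; apply: eq_bigr => nu _; rewrite mcoeffZ mcoeffX. Qed.

Lemma coef_self k (p : {mpoly K[k]}) rho :
  \sum_(nu <- msupp p) p@_nu * (nu == rho)%:R = p@_rho.
Proof. by rewrite -(coef_sumX p id) -mpolyE. Qed.

Section Dehom.
Variable m : nat.

Definition Dtup : (m + 1).-tuple {mpoly K[m]} :=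
  tupg (row_mx 0 1%:M : 'rV[K]_(m + 1)) (row_mx 1%:M 0 : 'M[K]_(m, m + 1)).
Definition Etup : m.-tuple {mpoly K[m + 1]} :=
  tupg 0 (col_mx 1%:M 0 : 'M[K]_(m + 1, m)).

Definition restr (mu : 'X_{1..m + 1}) : 'X_{1..m} := [multinom mu (lshift 1 i) | i < m].
Definition topm (mu : 'X_{1..m + 1}) : nat := mu (rshift m ord0).
Definition ext (nu : 'X_{1..m}) : 'X_{1..m + 1} :=
  [multinom (match split j with inl i => nu i | inr _ => 0%N end) | j < m + 1].

Lemma DtupL i : tnth Dtup (lshift 1 i) = 'X_i.
Proof.
rewrite tnth_mktuple row_mxEl mxE mpolyC0 add0r -(sum_unit i).
by apply: eq_bigr => j _; rewrite row_mxEl.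
Qed.

Lemma DtupR k : tnth Dtup (rshift m k) = 1.
Proof.
rewrite tnth_mktuple row_mxEr (ord1 k) mxE eqxx big1 ?addr0 // => j _.
by rewrite row_mxEr mxE scale0r.
Qed.

Lemma EtupE i : tnth Etup i = 'X_(lshift 1 i).
Proof.
rewrite tnth_mktuple mxE mpolyC0 add0r big_split_ord /= big_ord1 col_mxEd mxE scale0r addr0.
rewrite (bigD1 i) //= col_mxEu mxE eqxx scale1r big1 ?addr0 // => j hj.
by rewrite col_mxEu mxE (negbTE hj) scale0r.
Qed.

Lemma compD (H : {mpoly K[m + 1]}) :
  H \mPo Dtup = \sum_(mu <- msupp H) H@_mu *: 'X_[restr mu].
Proof.
rewrite comp_mpolyE; apply: eq_bigr => mu _; congr (_ *: _).
rewrite big_split_ord /= big_ord1 DtupR expr1n mulr1 mpolyXE_id.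
by apply: eq_bigr => i _; rewrite DtupL mnmE.
Qed.

Lemma compE (F : {mpoly K[m]}) :
  F \mPo Etup = \sum_(nu <- msupp F) F@_nu *: 'X_[ext nu].
Proof.
rewrite comp_mpolyE; apply: eq_bigr => nu _; congr (_ *: _).
rewrite mpolyXE_id big_split_ord /= big_ord1 mnmE.
rewrite (unsplitK (inr _ _ : 'I_m + 'I_1)) expr0 mulr1.
by apply: eq_bigr => i _; rewrite EtupE mnmE (unsplitK (inl _ _ : 'I_m + 'I_1)).
Qed.

Lemma mdeg_split mu : mdeg mu = (mdeg (restr mu) + topm mu)%N.
Proof.
rewrite !mdegE big_split_ord /= big_ord1; congr (_ + _)%N.
by apply: eq_bigr => i _; rewrite mnmE.
Qed.

Lemma restr_ext nu : restr (ext nu) = nu.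
Proof.
by apply/mnmP => i; rewrite mnmE mnmE (unsplitK (inl _ _ : 'I_m + 'I_1)).
Qed.

Lemma topm_ext nu : topm (ext nu) = 0%N.
Proof. by rewrite /topm mnmE (unsplitK (inr _ _ : 'I_m + 'I_1)). Qed.

Lemma mnm_split mu1 mu2 : restr mu1 = restr mu2 -> topm mu1 = topm mu2 -> mu1 = mu2.
Proof.
move=> hr ht; apply/mnmP => j; rewrite -(splitK j); case: (split j) => [i|k] /=.
  by have := congr1 (fun x : 'X_{1..m} => x i) hr; rewrite !mnmE.
by rewrite (ord1 k).
Qed.

Lemma dehomog d (H : {mpoly K[m + 1]}) (F : {mpoly K[m]}) :
  H \is d.-homog -> F \is d.-homog -> H \mPo Dtup = F -> H = F \mPo Etup.
Proof.
move=> hH hF hHF.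
have cF nu : F@_nu = \sum_(mu <- msupp H) H@_mu * (restr mu == nu)%:R.
  by rewrite -hHF compD coef_sumX.
have degH mu : mu \in msupp H -> mdeg mu = d by move/(dhomog_mf hH).
have C2 mu : mu \in msupp H -> F@_(restr mu) = H@_mu.
  move=> hmu; rewrite cF (bigD1_seq mu) //= ?msupp_uniq // eqxx mulr1.
  rewrite big_seq_cond big1 ?addr0 // => mu' /andP [hmu' ne].
  case: eqP => [e|]; last by rewrite mulr0.
  have et : topm mu' = topm mu.
    by have := degH _ hmu; have := degH _ hmu'; rewrite !mdeg_split e; lia.
  by rewrite (mnm_split e et) eqxx in ne.
have C3 mu : mu \in msupp H -> topm mu = 0%N.
  move=> hmu; case: (posnP (topm mu)) => // pos; exfalso.
  have : F@_(restr mu) = 0.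
    apply: (dhomog_nemf_coeff hF) => /=; have := degH _ hmu; rewrite mdeg_split.
    by move: pos; lia.
  by rewrite C2 // => /eqP; rewrite mcoeff_eq0 hmu.
apply/mpolyP => mu; rewrite compE coef_sumX.
have [t0|tn0] := eqVneq (topm mu) 0%N.
  have emu : mu = ext (restr mu) by apply: mnm_split; rewrite ?restr_ext ?topm_ext.
  rewrite [in RHS]emu.
  under eq_bigr => nu _ do rewrite (inj_eq (can_inj restr_ext)).
  rewrite coef_self.
  have [hmu|hmu] := boolP (mu \in msupp H); first by rewrite C2.
  have -> : H@_mu = 0 by apply/eqP; rewrite mcoeff_eq0.
  rewrite cF big_seq big1 // => mu' hmu'; case: eqP => [e|]; last by rewrite mulr0.
  have eq : mu' = mu by apply: mnm_split => //; rewrite C3 // t0.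
  by move: hmu; rewrite -eq hmu'.
rewrite big1; last first.
  by move=> nu _; case: eqP => [e|]; [rewrite -e topm_ext eqxx in tn0 | rewrite mulr0].
apply/eqP; rewrite mcoeff_eq0; apply/negP => hmu.
by rewrite C3 in tn0.
Qed.

End Dehom.


Lemma lemA m r d (F : {mpoly K[m]}) (p : 'rV[K]_m) (M : 'M[K]_(r, m)) :
  F \is d.-homog -> F \mPo tupg p 1%:M = F \mPo tupg 0 1%:M ->
  F \mPo tupg p M = F \mPo tupg 0 M.
Proof.
move=> hF h.
have e1 : F \mPo tupg p M = (F \mPo tupg p 1%:M) \mPo tupg 0 M.
  by rewrite shiftA mul0mx addr0 mulmx1.
by rewrite e1 h shiftA mul0mx addr0 mulmx1.
Qed.

Lemma lemB m d (F : {mpoly K[m]}) (a w v : 'rV[K]_m) :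
  F \is d.-homog -> F \mPo tupg w 1%:M = F \mPo tupg 0 1%:M ->
  (w *m a^T) 0 0 != 0 ->
  F \mPo tupg v (kermx a^T) = F \mPo tupg 0 (kermx a^T) ->
  F \mPo tupg v 1%:M = F \mPo tupg 0 1%:M.
Proof.
move=> hF hw hc hv.
set c := (w *m a^T) 0 0.
set M := kermx a^T.
set l : 'M[K]_(m, 1) := c^-1 *: a^T.
set P : 'M[K]_m := 1%:M - l *m w.
have PaT : P *m a^T = 0.
  rewrite /P mulmxBl mul1mx -mulmxA (mx11_scalar (w *m a^T)) -/c mul_mx_scalar.
  by rewrite /l scalerA mulfV // scale1r subrr.
have PM : (P <= M)%MS by apply/sub_kermxP.
set Q := P *m pinvmx M.
have QM : Q *m M = P by rewrite /Q mulmxKpV.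
have Pl : P + l *m w = 1%:M by rewrite /P subrK.
rewrite comp_tupg01 in hw.
set N1 : 'M[K]_(m + 1, m) := col_mx 1%:M w.
set Phi := F \mPo tupg 0 N1.
have hPhi : Phi \is d.-homog by apply: shift_homog.
have PhiD : Phi \mPo Dtup m = F.
  by rewrite /Phi /Dtup /N1 shiftA !mul_row_col mul0mx !mul1mx mul0mx !add0r addr0 hw.
have PhiE : Phi = F \mPo Etup m by exact: (dehomog hPhi hF PhiD).
have e1 : Phi \mPo tupg (row_mx v 0) (row_mx P l) = F \mPo tupg v 1%:M.
  by rewrite /Phi /N1 shiftA !mul_row_col !mulmx1 !mul0mx add0r addr0 Pl.
have e2 : Phi \mPo tupg (row_mx v 0) (row_mx P l) = F \mPo tupg v P.
  by rewrite PhiE /Etup shiftA !mul_row_col !mulmx1 !mulmx0 !addr0 add0r.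
have e3 : Phi \mPo tupg 0 (row_mx P l) = F \mPo tupg 0 1%:M.
  by rewrite /Phi /N1 shiftA !mul_row_col !mulmx1 !mul0mx addr0 Pl.
have e4 : Phi \mPo tupg 0 (row_mx P l) = F \mPo tupg 0 P.
  by rewrite PhiE /Etup shiftA !mul_row_col !mulmx1 !mulmx0 !addr0 mul0mx addr0.
have e5 : F \mPo tupg v P = F \mPo tupg 0 P.
  rewrite -QM.
  have -> : F \mPo tupg v (Q *m M) = (F \mPo tupg v M) \mPo tupg 0 Q.
    by rewrite shiftA mul0mx addr0.
  by rewrite hv shiftA mul0mx addr0.
by rewrite -e1 e2 e5 -e4 e3.
Qed.

End T.

Lemma ext_indep (K : fieldType) r N (V : 'M[K]_(r, N)) (u : 'rV[K]_N) :
  row_free V -> ~~ (u <= V)%MS -> row_free (col_mx V u).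
Proof.
move=> hV hu; rewrite /row_free eqn_leq rank_leq_row /=.
have lt : (V < col_mx V u)%MS.
  rewrite ltmxE; apply/andP; split; first by rewrite -addsmxE addsmxSl.
  by rewrite col_mx_sub submx_refl.
have := rank_ltmx lt; move/eqP: hV => -> h; apply: leq_trans h; by rewrite addn1.
Qed.

Section Main.
Variables (K : fieldType) (n : nat).
Implicit Types S : 'rV[K]_n.+1 -> Prop.

Definition kmax (S : 'rV[K]_n.+1 -> Prop) : nat :=
  (\max_(r < n.+2 | has_indepb S r) r)%N.

Lemma indep_le S r : has_indep S r -> (r <= n.+1)%N.
Proof.
case=> V [hV _]; move/eqP: hV => <-; exact: rank_leq_col.
Qed.

Lemma has_indepbP S r : has_indepb S r = true <-> has_indep S r.
Proof. by rewrite /has_indepb; case: excluded_middle_informative. Qed.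

Lemma indep0 S : has_indep S 0.
Proof.
exists 0; split; last by case.
by rewrite /row_free mxrank0.
Qed.

Lemma kmax_le S r : has_indep S r -> (r <= kmax S)%N.
Proof.
move=> h; have hr : (r < n.+2)%N by rewrite ltnS; exact: indep_le h.
have := @leq_bigmax_cond _ (fun i : 'I_n.+2 => has_indepb S i) (fun i => nat_of_ord i) (Ordinal hr).
by apply; apply/has_indepbP.
Qed.

Lemma kmax_indep S : has_indep S (kmax S).
Proof.
have h0 : (0 < #|(fun i : 'I_n.+2 => has_indepb S i)|)%N.
  apply/card_gt0P; exists ord0; rewrite /in_mem /=; apply/has_indepbP; exact: indep0.
have [i0 hi0 e] := eq_bigmax_cond (fun i : 'I_n.+2 => nat_of_ord i) h0.
rewrite /kmax; rewrite e; apply/has_indepbP; exact: hi0.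
Qed.

Lemma pdimE S : pdim S = (kmax S)%:Z - 1.
Proof. by []. Qed.


Implicit Types F : {mpoly K[n.+1]}.

Lemma multE r F p (M : 'M[K]_(r, n.+1)) d :
  mult_ge F p M d <->
  (forall mono : 'X_{1..r}, (mdeg mono < d)%N -> (F \mPo tupg p M)@_mono = 0).
Proof. by []. Qed.

Lemma LA F d (a p : 'rV[K]_n.+1) : F \is d.-homog -> LambdaX F d p -> on_hyp a p ->
  LambdaXH F d a p.
Proof.
move=> hF [nz hm] ha; split; first by []; split; first by [].
apply/multE/(mult_iff p (kermx a^T) hF); apply: (lemA (kermx a^T) hF).
by apply/(mult_iff p 1%:M hF); apply/multE.
Qed.

Lemma LB F d (a w v : 'rV[K]_n.+1) : F \is d.-homog -> LambdaX F d w ->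
  (w *m a^T) 0 0 != 0 -> LambdaXH F d a v -> LambdaX F d v.
Proof.
move=> hF [_ hw] hc [nz [_ hv]]; split; first by [].
apply/multE/(mult_iff v 1%:M hF); apply: (lemB hF _ hc).
  by apply/(mult_iff w 1%:M hF); apply/multE.
by apply/(mult_iff v (kermx a^T) hF); apply/multE.
Qed.

Definition lform (u : 'rV[K]_n.+1) : {mpoly K[n.+1]} := \sum_(j < n.+1) u 0 j *: 'X_j.

Lemma lform_eval u (a : 'rV[K]_n.+1) : (lform u).@[coords a] = (u *m a^T) 0 0.
Proof.
rewrite /lform raddf_sum /= mxE; apply: eq_bigr => j _.
by rewrite mevalZ mevalXU /coords mxE.
Qed.

Lemma lform_homog u : lform u \is 1.-homog.
Proof.
apply: rpred_sum => j _; apply: dhomogZ; rewrite dhomogX; apply/eqP; apply: mdeg1.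
Qed.

Lemma pdim_mono S T : (forall p, S p -> T p) -> (pdim S <= pdim T)%R.
Proof.
move=> h; rewrite !pdimE lerD2r lez_nat.
apply: kmax_le; have [V [hV hr]] := kmax_indep S; exists V; split => // i.
exact: h.
Qed.

Lemma SX_iff F d (h0 a : 'rV[K]_n.+1) : F \is d.-homog ->
  SX F d h0 a <-> (forall p, (LambdaX F d p /\ on_hyp h0 p) -> p *m a^T = 0).
Proof.
move=> hF; split; last first.
  move=> h; apply: pdim_mono => p [hp hh]; split => //.
  by apply: LA => //; apply: h.
move=> hSX p [hp hh]; apply/eqP; apply: contraT => hpa.
have hc : (p *m a^T) 0 0 != 0.
  apply: contra hpa => /eqP e; apply/eqP; rewrite [p *m a^T]mx11_scalar e.
  exact: raddf0.
set S' := fun p => LambdaXH F d a p /\ on_hyp h0 p.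
have [V [hV hr]] := kmax_indep S'.
have VaT : V *m a^T = 0.
  by apply/row_matrixP => i; rewrite row_mul row0; have [[_ [ha _]] _] := hr i.
have hpV : ~~ (p <= V)%MS.
  apply/negP => sub; move/negP: hpa; apply.
  apply/eqP/sub_kermxP; apply: submx_trans sub _; exact/sub_kermxP.
have hin : has_indep (fun p => LambdaX F d p /\ on_hyp h0 p) (kmax S' + 1).
  exists (col_mx V p); split; first exact: ext_indep.
  move=> i; rewrite -(splitK i); case: (split i) => [j|j] /=.
    rewrite rowKu; have [hx hh'] := hr j; split => //.
    exact: (LB hF hp hc hx).
  by rewrite rowKd row_id; split.
have := kmax_le hin; move: hSX; rewrite /SX !pdimE -/S'; lia.
Qed.

End Main.

Theorem lemma8 (d n : nat) : (2 <= d)%N ->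
  exists C : nat,
  forall (K : closedFieldType) (F : {mpoly K[n.+1]}) (h0 : 'rV[K]_n.+1),
    F \is d.-homog -> irreducible_elt F ->
    h0 != 0 ->
    (exists p, LambdaX F d p /\ on_hyp h0 p) ->
    exists gs : seq {mpoly K[n.+1]},
      (size gs <= C)%N /\
      (forall g, g \in gs -> exists e : nat, (e <= C)%N /\ g \is e.-homog) /\
      (forall a : 'rV[K]_n.+1, a != 0 ->
         (SX F d h0 a <-> forall g, g \in gs -> g.@[coords a] = 0)) /\
      (exists a : 'rV[K]_n.+1, a != 0 /\ ~ SX F d h0 a).
Proof.
move=> _; exists n.+1 => K F h0 hF _ _ [p0 hp0].
set S := fun p => LambdaX F d p /\ on_hyp h0 p.
have [V [hV hr]] := kmax_indep S.
have kle : (kmax S <= n.+1)%N by apply: indep_le (kmax_indep S).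
have span : forall p, S p -> (p <= V)%MS.
  move=> p hp; apply: contraT => hpV.
  have hin : has_indep S (kmax S + 1).
    exists (col_mx V p); split; first exact: ext_indep.
    move=> i; rewrite -(splitK i); case: (split i) => [j|j] /=.
      by rewrite rowKu.
    by rewrite rowKd row_id.
  by have := kmax_le hin; lia.
have key : forall a : 'rV[K]_n.+1, SX F d h0 a <-> (forall i, row i V *m a^T = 0).
  move=> a; rewrite (SX_iff h0 a hF); split.
    by move=> h i; apply: h; apply: hr.
  move=> h p hp; have := span p hp => sub.
  have VaT : V *m a^T = 0 by apply/row_matrixP => i; rewrite row_mul row0 h.
  by rewrite -(mulmxKpV sub) -mulmxA VaT mulmx0.
exists [seq lform (row i V) | i <- enum 'I_(kmax S)]; split.
  by rewrite size_map size_enum_ord.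
split.
  move=> g /mapP [i _ ->]; exists 1%N; split => //; exact: lform_homog.
split.
  move=> a _; rewrite key; split.
    by move=> h g /mapP [i _ ->]; rewrite lform_eval h mxE.
  move=> h i; rewrite [row i V *m a^T]mx11_scalar -lform_eval h ?raddf0 //.
  by apply/mapP; exists i => //; rewrite mem_enum.
have [j hj] : exists j, p0 0 j != 0.
  case: hp0 => [[nz _] _]; apply/existsP; apply: contraR nz => /existsPn h.
  by apply/eqP/rowP => j; rewrite mxE; move: (h j); rewrite negbK => /eqP.
exists (delta_mx 0 j); split.
  by apply/eqP => /matrixP /(_ 0 j); rewrite !mxE !eqxx /= => /eqP; rewrite oner_eq0.
rewrite (SX_iff h0 _ hF) => h.
have := h p0 hp0 => /matrixP /(_ 0 0); rewrite !mxE => e.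
move: hj; rewrite -e.
rewrite (bigD1 j) //= !mxE !eqxx mulr1 big1 ?addr0 ?eqxx //.
by move=> k hk; rewrite !mxE eqxx /= (negbTE hk) mulr0.
Qed.
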